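(* The elements $x^{\mathbf a_1}-\lambda x^{\mathbf a_0},\dots,x^{\mathbf a_m}-\lambda x^{\mathbf a_0}$ form a regular sequence on $S'$.
   Context: Let $A=\{\mathbf a_1,\dots,\mathbf a_m\}\subseteq\mathbb Z^n$ be linearly independent over $\mathbb R$, $\mathbf a_0\in\mathbb Z^n$, and $\ell_0,\dots,\ell_m$ positive integers with gcd $1$, $\ell_0\mathbf a_0=\sum_{j=1}^m\ell_j\mathbf a_j$, $\ell_0=\sum_{j=1}^m\ell_j$. Let $V$ be the real span of $A$, $V_{\mathbb Z}=V\cap\mathbb Z^n$, $C(A)$ the real cone generated by $A$, $M=V_{\mathbb Z}\cap C(A)$, and $S'$ the $\mathbb C(\lambda)$-subalgebra of $\mathbb C(\lambda)[x_1^{\pm1},\dots,x_n^{\pm1}]$ spanned by $\{x^u:u\in M\}$, $\lambda$ an indeterminate. *)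

(* Defs.v *)
From HB Require Import structures.
From mathcomp Require Import all_boot all_order all_algebra.
From mathcomp Require Import reals complex fraction.
From mathcomp.multinomials Require Import freeg.
Set Implicit Arguments. Unset Strict Implicit. Unset Printing Implicit Defensive.
Import GRing.Theory Num.Theory.
Local Open Scope ring_scope.

(* The base field C(lambda): fractions of polynomials over C = R[i],
   where R : realType is the field of real numbers. *)
Definition Clam (R : realType) : fieldType := {fraction {poly R[i]}}.

Definition lam (R : realType) : Clam R := @FracField.tofrac {poly R[i]} 'X.

(* Laurent polynomials  C(lambda)[x_1^{+-1},...,x_n^{+-1}]  = group algebra of
   Z^n: finitely supported formal combinations  sum_u c_u x^u, u in Z^n. *)
Definition laurent (R : realType) (n : nat) := {freeg 'rV[int]_n / Clam R}.

Definition xmon (R : realType) (n : nat) (u : 'rV[int]_n) : laurent R n := << u >>.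

Definition lmul (R : realType) (n : nat) (f g : laurent R n) : laurent R n :=
  \sum_(u <- dom f) \sum_(v <- dom g) << coeff u f * coeff v g *g (u + v) >>.

Definition lone (R : realType) (n : nat) : laurent R n := xmon R (0 : 'rV[int]_n).

Definition rvR (R : realType) (n : nat) (u : 'rV[int]_n) : 'rV[R]_n :=
  map_mx (fun z : int => z%:~R) u.

(* M = V_Z \cap C(A): integer vectors that are nonnegative real combinations
   of a_1..a_m (such vectors automatically lie in V = span_R A). *)
Definition inM (R : realType) (n m : nat) (a : 'I_m -> 'rV[int]_n)
  (u : 'rV[int]_n) : Prop :=
  exists c : 'I_m -> R, (forall j, 0 <= c j) /\
    rvR R u = \sum_(j < m) c j *: rvR R (a j).

(* S' : the C(lambda)-span of {x^u : u in M}, i.e. Laurent polynomials all of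
   whose exponents lie in M. *)
Definition inS' (R : realType) (n m : nat) (a : 'I_m -> 'rV[int]_n)
  (f : laurent R n) : Prop :=
  forall u, u \in dom f -> inM R a u.

Definition in_ideal (R : realType) (n : nat) (P : laurent R n -> Prop)
  (fs : seq (laurent R n)) (h : laurent R n) : Prop :=
  exists gs : seq (laurent R n), size gs = size fs /\
    (forall g, g \in gs -> P g) /\
    h = \sum_(i < size fs) lmul gs`_i fs`_i.

Definition regular_seq (R : realType) (n : nat) (P : laurent R n -> Prop)
  (fs : seq (laurent R n)) : Prop :=
  [/\ forall f, f \in fs -> P f,
      forall i, (i < size fs)%N -> forall g, P g ->
         in_ideal P (take i fs) (lmul g fs`_i) -> in_ideal P (take i fs) g
    & ~ in_ideal P fs (lone R n)].

(* Main.v *)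
Require Import Defs.
From HB Require Import structures.
From mathcomp Require Import all_boot all_order all_algebra.
From mathcomp Require Import reals complex fraction.
From mathcomp.multinomials Require Import freeg.
From mathcomp Require Import zify ring lra.
From Stdlib Require Import ClassicalEpsilon.
Import Order.TTheory GRing.Theory Num.Theory.
Local Open Scope ring_scope.
Set Implicit Arguments. Unset Strict Implicit. Unset Printing Implicit Defensive.
Lemma frac_decomp (T : idomainType) (x : {fraction T}) :
  exists P Q : T, Q != 0 /\ x * (FracField.tofrac Q) = FracField.tofrac P.
Proof.
elim/quotW: x => r.
exists (\n_r), (\d_r); split; first exact: denom_ratioP.
unlock FracField.tofrac; rewrite -[LHS]FracField.pi_mul.
apply/eqmodP; rewrite /= FracField.equivfE /FracField.mulf /=.
rewrite !numden_Ratio ?(oner_neq0, mulf_neq0, denom_ratioP) //.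
by rewrite !mulr1 mulrC.
Qed.

Section Laurent.
Variables (R : realType) (n : nat).
Local Notation L := (laurent R n).
Local Notation E := ('rV[int]_n).
Local Notation K := (Clam R).

Definition ext (G : E -> L) (f : L) : L := \sum_(u <- dom f) coeff u f *: G u.

Lemma ext_sub G f s : uniq s -> {subset dom f <= s} ->
  ext G f = \sum_(u <- s) coeff u f *: G u.
Proof.
move=> us sub; rewrite /ext [RHS](bigID (mem (dom f))) /=.
rewrite [X in _ = _ + X]big1 ?addr0; last first.
  by move=> u /negbTE Hu; rewrite coeff_outdom ?Hu // scale0r.
rewrite -[RHS]big_filter; apply: perm_big; apply: uniq_perm.
- exact: uniq_dom.
- exact: filter_uniq.
by move=> u; rewrite mem_filter; case Hu: (u \in dom f) => //=; rewrite sub.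
Qed.

Lemma extD G f g : ext G (f + g) = ext G f + ext G g.
Proof.
set s := undup (dom f ++ dom g).
have us : uniq s by exact: undup_uniq.
rewrite (@ext_sub G f s) // ?(@ext_sub G g s) ?(@ext_sub G (f + g) s) //.
- by rewrite -big_split /=; apply: eq_bigr => u _; rewrite coeffD scalerDl.
- by move=> u /domD_subset; rewrite mem_undup.
- by move=> u Hu; rewrite mem_undup mem_cat Hu orbT.
- by move=> u Hu; rewrite mem_undup mem_cat Hu.
Qed.

Lemma extZ G c f : ext G (c *: f) = c *: ext G f.
Proof.
rewrite (@ext_sub G (c *: f) (dom f)) ?uniq_dom //; last exact: domZ_subset.
rewrite /ext scaler_sumr; apply: eq_bigr => u _; by rewrite coeffZ scalerA.
Qed.

Lemma ext0 G : ext G 0 = 0.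
Proof. by rewrite /ext dom0 big_nil. Qed.

Lemma extN G f : ext G (- f) = - ext G f.
Proof. by rewrite -scaleN1r extZ scaleN1r. Qed.

Lemma extB G f g : ext G (f - g) = ext G f - ext G g.
Proof. by rewrite extD extN. Qed.

Lemma ext_sum G (I : Type) (r : seq I) (Pr : pred I) (F : I -> L) :
  ext G (\sum_(i <- r | Pr i) F i) = \sum_(i <- r | Pr i) ext G (F i).
Proof.
elim: r => [|i r IH]; first by rewrite !big_nil ext0.
by rewrite !big_cons; case: (Pr i); rewrite ?extD IH.
Qed.

Lemma coeff_xmon (u w : E) : coeff w (xmon R u) = (u == w)%:R.
Proof. by rewrite /xmon coeffU mul1r. Qed.

Lemma ext_xmon G (u : E) : ext G (xmon R u) = G u.
Proof. by rewrite /ext /xmon domU1 big_seq1 coeffU mul1r eqxx scale1r. Qed.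

Lemma scaleU (c : K) (z : E) : << c *g z >> = c *: xmon R z :> L.
Proof.
apply/eqP/freeg_eqP => w; by rewrite coeffZ !coeffU mul1r.
Qed.

Lemma ext_id f : ext (@xmon R n) f = f.
Proof.
rewrite -{2}(freeg_sumE f) /ext; apply: eq_bigr => u _; by rewrite scaleU.
Qed.

Lemma ext_ext G H f :
  ext G (ext H f) = ext (fun u => ext G (H u)) f.
Proof. by rewrite [X in ext G X]/ext ext_sum [RHS]/ext; apply: eq_bigr => u _; rewrite extZ. Qed.

Lemma ext_eq G H f : {in dom f, G =1 H} -> ext G f = ext H f.
Proof. by move=> e; apply: eq_big_seq => u /e ->. Qed.

Lemma coeff_ext G f w :
  coeff w (ext G f) = \sum_(u <- dom f) coeff u f * coeff w (G u).
Proof. rewrite /ext raddf_sum; apply: eq_bigr => u _. exact: coeffZ. Qed.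

Lemma dom_ext G f w : w \in dom (ext G f) ->
  exists2 u, u \in dom f & w \in dom (G u).
Proof.
rewrite mem_dom coeff_ext => H.
have : has (fun u => coeff w (G u) != 0) (dom f).
  apply/negPn/negP => /hasPn H0; move/eqP: H; apply.
  by apply: big1_seq => u /H0 /negPn /eqP ->; rewrite mulr0.
by case/hasP => u Hu Hw; exists u => //; rewrite mem_dom.
Qed.

End Laurent.
Section Laurent2.
Variables (R : realType) (n : nat).
Local Notation L := (laurent R n).
Local Notation E := ('rV[int]_n).
Local Notation K := (Clam R).

Lemma lmulE (f g : L) :
  lmul f g = ext (fun u => ext (fun v => xmon R (u + v)) g) f.
Proof.
rewrite /lmul /ext; apply: eq_bigr => u _; rewrite scaler_sumr.
by apply: eq_bigr => v _; rewrite scaleU scalerA.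
Qed.

Definition shift (v : E) (g : L) : L := ext (fun w => xmon R (v + w)) g.

Lemma lmul_xmon (v : E) (g : L) : lmul (xmon R v) g = shift v g.
Proof. by rewrite lmulE ext_xmon. Qed.

Lemma lmulD (f1 f2 g : L) : lmul (f1 + f2) g = lmul f1 g + lmul f2 g.
Proof. by rewrite !lmulE extD. Qed.

Lemma lmulZ (c : K) (f g : L) : lmul (c *: f) g = c *: lmul f g.
Proof. by rewrite !lmulE extZ. Qed.

Lemma lmul0 (g : L) : lmul 0 g = 0.
Proof. by rewrite lmulE ext0. Qed.

Lemma lmul_sum (I : Type) (r : seq I) (F : I -> L) (g : L) :
  lmul (\sum_(i <- r) F i) g = \sum_(i <- r) lmul (F i) g.
Proof. by rewrite lmulE ext_sum; apply: eq_bigr => i _; rewrite lmulE. Qed.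

Lemma lmul_ext (G : E -> L) (f g : L) : lmul (ext G f) g = ext (fun u => lmul (G u) g) f.
Proof. by rewrite [LHS]lmulE ext_ext; apply: ext_eq => u _; rewrite lmulE. Qed.

Lemma shift_bin (v u w : E) (c : K) :
  shift v (xmon R u - c *: xmon R w) = xmon R (v + u) - c *: xmon R (v + w).
Proof. by rewrite /shift extB extZ !ext_xmon. Qed.

Definition supp_in (Q : E -> Prop) (f : L) := forall u, u \in dom f -> Q u.

Lemma supp_ext Q (G : E -> L) (f : L) : (forall u, u \in dom f -> supp_in Q (G u)) ->
  supp_in Q (ext G f).
Proof. by move=> H w /dom_ext [u Hu Hw]; exact: H Hu _ Hw. Qed.

Lemma supp_add Q (f g : L) : supp_in Q f -> supp_in Q g -> supp_in Q (f + g).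
Proof. by move=> Hf Hg u /domD_subset; rewrite mem_cat => /orP [/Hf|/Hg]. Qed.

Lemma supp_scale Q (c : K) (f : L) : supp_in Q f -> supp_in Q (c *: f).
Proof. by move=> Hf u /domZ_subset /Hf. Qed.

Lemma supp_opp Q (f : L) : supp_in Q f -> supp_in Q (- f).
Proof. by move=> Hf; rewrite -scaleN1r; apply: supp_scale. Qed.

Lemma supp_0 Q : supp_in Q (0 : L).
Proof. by move=> u; rewrite dom0. Qed.

Lemma supp_xmon Q (u : E) : Q u -> supp_in Q (xmon R u).
Proof. by move=> Hu w; rewrite /xmon domU1 inE => /eqP ->. Qed.

Lemma supp_sum Q (I : Type) (r : seq I) (F : I -> L) :
  (forall i, supp_in Q (F i)) -> supp_in Q (\sum_(i <- r) F i).
Proof.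
move=> H; elim: r => [|i r IH]; first by rewrite big_nil; exact: supp_0.
by rewrite big_cons; apply: supp_add.
Qed.

End Laurent2.
Section Coord.
Variables (R : realType) (n m : nat) (a : 'I_m -> 'rV[int]_n) (a0 : 'rV[int]_n)
  (l : 'I_m -> nat) (l0 : nat).
Hypothesis hfree : row_free (\matrix_(j < m) rvR R (a j)).
Hypothesis hl0 : (0 < l0)%N.
Hypothesis hl : forall j, (0 < l j)%N.
Hypothesis ha0 : a0 *+ l0 = \sum_(j < m) a j *+ l j.
Hypothesis hsum : l0 = (\sum_(j < m) l j)%N.

Local Notation E := ('rV[int]_n).
Local Notation Amat := (\matrix_(j < m) rvR R (a j)).

Definition co (u : E) : 'rV[R]_m := rvR R u *m pinvmx Amat.

Lemma rvRD (u v : E) : rvR R (u + v) = rvR R u + rvR R v.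
Proof. by apply/matrixP => i j; rewrite !mxE intrD. Qed.
Lemma rvRN (u : E) : rvR R (- u) = - rvR R u.
Proof. by apply/matrixP => i j; rewrite !mxE intrN. Qed.
Lemma rvR0 : rvR R (0 : E) = 0.
Proof. by apply/matrixP => i j; rewrite !mxE. Qed.
Lemma rvRB (u v : E) : rvR R (u - v) = rvR R u - rvR R v.
Proof. by rewrite rvRD rvRN. Qed.
Lemma rvRMn (u : E) (k : nat) : rvR R (u *+ k) = rvR R u *+ k.
Proof. elim: k => [|k IH]; by rewrite ?mulr0n ?rvR0 // !mulrS rvRD IH. Qed.
Lemma rvRMz (u : E) (z : int) : rvR R (u *~ z) = rvR R u *~ z.
Proof.
case: z => k; first exact: rvRMn.
by rewrite !NegzE !mulrNz rvRN; congr (- _); exact: rvRMn.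
Qed.
Lemma rvR_sum (I : Type) (r : seq I) (P : pred I) (F : I -> E) :
  rvR R (\sum_(i <- r | P i) F i) = \sum_(i <- r | P i) rvR R (F i).
Proof.
elim: r => [|i r IH]; first by rewrite !big_nil rvR0.
by rewrite !big_cons; case: (P i); rewrite ?rvRD IH.
Qed.

Lemma coD u v : co (u + v) = co u + co v.
Proof. by rewrite /co rvRD mulmxDl. Qed.
Lemma coN u : co (- u) = - co u.
Proof. by rewrite /co rvRN mulNmx. Qed.
Lemma coB u v : co (u - v) = co u - co v.
Proof. by rewrite coD coN. Qed.
Lemma co0 : co 0 = 0.
Proof. by rewrite /co rvR0 mul0mx. Qed.
Lemma coMn u k : co (u *+ k) = co u *+ k.
Proof. elim: k => [|k IH]; by rewrite ?mulr0n ?co0 // !mulrS coD IH. Qed.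
Lemma coMz u z : co (u *~ z) = co u *~ z.
Proof.
case: z => k; first exact: coMn.
by rewrite !NegzE !mulrNz coN; congr (- _); exact: coMn.
Qed.
Lemma co_sum (I : Type) (r : seq I) (P : pred I) (F : I -> E) :
  co (\sum_(i <- r | P i) F i) = \sum_(i <- r | P i) co (F i).
Proof.
elim: r => [|i r IH]; first by rewrite !big_nil co0.
by rewrite !big_cons; case: (P i); rewrite ?coD IH.
Qed.

Lemma co_a j : co (a j) = delta_mx 0 j.
Proof.
by rewrite /co -[rvR R (a j)](rowK (fun j => rvR R (a j))) rowE -mulmxA mulmxVp // mulmx1.
Qed.

Lemma co_aE j k : co (a j) 0 k = (j == k)%:R.
Proof. by rewrite co_a mxE eqxx /= eq_sym. Qed.

Lemma comb_mul (c : 'I_m -> R) :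
  \sum_(j < m) c j *: rvR R (a j) = (\row_j c j) *m Amat.
Proof. rewrite mulmx_sum_row; apply: eq_bigr => j _; by rewrite mxE rowK. Qed.

Lemma co_combE (c : 'I_m -> R) (u : E) :
  rvR R u = \sum_(j < m) c j *: rvR R (a j) -> forall k, co u 0 k = c k.
Proof.
move=> H k; rewrite /co.
rewrite H comb_mul.
by rewrite -mulmxA mulmxVp // mulmx1 mxE.
Qed.

Definition inMp (u : E) := (rvR R u <= Amat)%MS /\ forall j, 0 <= co u 0 j.

Lemma inMP u : inM R a u <-> inMp u.
Proof.
split.
  case=> c [c0 H]; split.
    by rewrite H comb_mul submxMl.
  by move=> j; rewrite (co_combE H).
case=> Hs H0; exists (fun j => co u 0 j); split => //.
rewrite -{1}(mulmxKpV Hs) mulmx_sum_row; apply: eq_bigr => j _; by rewrite rowK.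
Qed.


Lemma coE u v k : co (u + v) 0 k = co u 0 k + co v 0 k.
Proof. by rewrite coD mxE. Qed.
Lemma coBE u v k : co (u - v) 0 k = co u 0 k - co v 0 k.
Proof. by rewrite coB !mxE. Qed.

Lemma inMp_add u v : inMp u -> inMp v -> inMp (u + v).
Proof.
case=> Hu Pu [Hv Pv]; split; first by rewrite rvRD addmx_sub.
by move=> j; rewrite coE addr_ge0.
Qed.

Lemma inMp_a j : inMp (a j).
Proof.
split; first by rewrite -[rvR R (a j)](rowK (fun j => rvR R (a j))) row_sub.
by move=> k; rewrite co_aE ler0n.
Qed.

Definition p (k : 'I_m) : R := (l k)%:R / (l0)%:R.

Lemma l0_neq0 : (l0%:R : R) != 0.
Proof. by rewrite pnatr_eq0 -lt0n. Qed.

Lemma co_a0 k : co a0 0 k = p k.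
Proof.
have := congr1 (fun u => co u 0 k) ha0 => /=.
rewrite coMn co_sum mulmxnE summxE.
under eq_bigr => j _ do rewrite coMn mulmxnE co_aE.
rewrite (bigD1 k) //= eqxx big1 ?addr0; last first.
  by move=> j /negbTE ->; rewrite mul0rn.
move=> H; rewrite /p; apply: (mulIf l0_neq0); rewrite mulr_natr H divfK //; exact: l0_neq0.
Qed.

Lemma p_gt0 k : 0 < p k.
Proof. by rewrite /p divr_gt0 // ltr0n ?hl. Qed.

Lemma inMp_a0 : inMp a0.
Proof.
split; last by move=> k; rewrite co_a0 ltW // p_gt0.
have H : (rvR R a0 *+ l0 <= Amat)%MS.
  rewrite -rvRMn ha0 rvR_sum summx_sub // => j _.
  rewrite rvRMn -scaler_nat scalemx_sub //.
  by rewrite -[rvR R (a j)](rowK (fun j => rvR R (a j))) row_sub.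
have -> : rvR R a0 = (l0%:R)^-1 *: (rvR R a0 *+ l0).
  by rewrite -scaler_nat scalerA mulVf ?scale1r //; exact: l0_neq0.
exact: scalemx_sub.
Qed.

Lemma inMp_sub_a u j : inMp u -> 1 <= co u 0 j -> inMp (u - a j).
Proof.
case=> Hu Pu H1; split.
  rewrite rvRB addmx_sub // -scaleN1r scalemx_sub //.
  by rewrite -[rvR R (a j)](rowK (fun j => rvR R (a j))) row_sub.
move=> k; rewrite coBE co_aE; case: eqP => [<-|_]; first by rewrite subr_ge0.
by rewrite subr0.
Qed.
Local Notation Y := ('rV[R]_m).

Definition Fs (i : nat) (y : Y) (S : nat) : int :=
  \sum_(j < m | (j < i)%N) Num.floor (y 0 j + S%:R * p j).

Definition nonneg (y : Y) := forall j, 0 <= y 0 j.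

Lemma Fs_ge0 i y S : nonneg y -> 0 <= Fs i y S.
Proof.
move=> y0; apply: sumr_ge0 => j _; rewrite floor_ge0 addr_ge0 //.
by rewrite mulr_ge0 // ltW // p_gt0.
Qed.

Lemma Fs_mono i y S : Fs i y S <= Fs i y S.+1.
Proof.
apply: ler_sum => j _; apply: le_floor; rewrite lerD2l ler_wpM2r //.
  by rewrite ltW // p_gt0.
by rewrite ler_nat.
Qed.

Lemma Fs_bound i y S : (Fs i y S)%:~R <=
  \sum_(j < m | (j < i)%N) y 0 j + S%:R * \sum_(j < m | (j < i)%N) p j :> R.
Proof.
rewrite /Fs rmorph_sum mulr_sumr -big_split /=; apply: ler_sum => j _.
exact: floor_le.
Qed.

Lemma sum_p : \sum_(j < m) p j = 1.
Proof.
rewrite /p -mulr_suml -natr_sum -hsum divff //; exact: l0_neq0.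
Qed.

Lemma sigma_lt1 i : (i < m)%N -> \sum_(j < m | (j < i)%N) p j < 1.
Proof.
move=> im; rewrite -sum_p [X in _ < X](bigID (fun j : 'I_m => (j < i)%N)) /= ltrDl.
rewrite (bigD1 (Ordinal im)) /= ?ltnn // ltr_wpDr //; last exact: p_gt0.
by apply: sumr_ge0 => j _; rewrite ltW // p_gt0.
Qed.

Lemma dIVT (G : nat -> int) N : 0 <= G 0%N -> (forall S, G S - 1 <= G S.+1) ->
  G N < 0 -> exists S, G S = 0.
Proof.
move=> G0 GS; elim: N => [|N IH] GN; first by move: G0; rewrite leNgt GN.
have [GN'|GN'] := ltP (G N) 0; first exact: IH.
exists N; have := GS N; lia.
Qed.

Lemma Fs_ex i y : (i < m)%N -> nonneg y -> exists S, Fs i y S == S%:Z.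
Proof.
move=> im y0.
set s := \sum_(j < m | (j < i)%N) p j.
set t := \sum_(j < m | (j < i)%N) y 0 j.
have s1 : 0 < 1 - s by rewrite subr_gt0 sigma_lt1.
have t0 : 0 <= t by apply: sumr_ge0.
set N := Num.bound (t / (1 - s)).
have HN : t / (1 - s) < N%:R by apply: archi_boundP; rewrite divr_ge0 // ltW.
have HF : Fs i y N < N%:Z.
  have : (Fs i y N)%:~R < N%:R :> R.
    apply: (le_lt_trans (Fs_bound _ _ _)).
    rewrite -/s -/t.
    have e : t = t / (1 - s) * (1 - s) by rewrite divfK // gt_eqF.
    move: HN e; set q := t / (1 - s) => HN e; rewrite e; clearbody q.
    have : 0 < (N%:R - q) * (1 - s) by rewrite mulr_gt0 // subr_gt0.
    move=> H; nra.
  by rewrite -(ltr_int R) /=.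
have [S HS] : exists S, Fs i y S - S%:Z = 0.
  apply: (@dIVT (fun S => Fs i y S - S%:Z) N).
  - by rewrite subr0 Fs_ge0.
  - move=> S; have := Fs_mono i y S; lia.
  - by rewrite subr_lt0.
by exists S; rewrite -subr_eq0 HS.
Qed.

Definition Sfix (i : nat) (y : Y) : nat :=
  match excluded_middle_informative (exists S, Fs i y S == S%:Z) with
  | left h => ex_minn h
  | right _ => 0%N
  end.

Lemma Sfix_spec i y : (i < m)%N -> nonneg y ->
  Fs i y (Sfix i y) = (Sfix i y)%:Z /\
  forall S, Fs i y S = S%:Z -> (Sfix i y <= S)%N.
Proof.
move=> im y0; rewrite /Sfix; case: excluded_middle_informative => [h|nh].
  case: ex_minnP => S /eqP HS Hmin; split => // S' HS'; apply: Hmin.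
  exact/eqP.
by exfalso; apply: nh; exact: Fs_ex.
Qed.
Lemma floorD1 (x : R) : Num.floor (x + 1) = Num.floor x + 1.
Proof. by rewrite floorDrz ?floor1 // rpred1. Qed.

Lemma nonneg_co_add u v : nonneg (co u) -> nonneg (co v) -> nonneg (co (u + v)).
Proof. by move=> Hu Hv j; rewrite coE addr_ge0. Qed.

Lemma nonneg_a j : nonneg (co (a j)).
Proof. by move=> k; rewrite co_aE ler0n. Qed.

Lemma nonneg_a0 : nonneg (co a0).
Proof. by move=> k; rewrite co_a0 ltW // p_gt0. Qed.

Lemma Fs_addA i u (j : 'I_m) S : (j < i)%N ->
  Fs i (co (u + a j)) S = Fs i (co u) S + 1.
Proof.
move=> ji; rewrite /Fs (bigD1 j) //= [in RHS](bigD1 j) //= -addrAC; congr (_ + _).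
  by rewrite coE co_aE eqxx addrAC floorD1.
apply: eq_bigr => k /andP [_ /negbTE kj]; by rewrite coE co_aE eq_sym kj addr0.
Qed.

Lemma Fs_addA0 i u S : Fs i (co (u + a0)) S = Fs i (co u) S.+1.
Proof.
rewrite /Fs; apply: eq_bigr => k _; congr (Num.floor _).
by rewrite coE co_a0 -natr1; ring.
Qed.

Lemma Sfix_rel i u (j : 'I_m) : (i < m)%N -> (j < i)%N -> nonneg (co u) ->
  Sfix i (co (u + a j)) = (Sfix i (co (u + a0))).+1.
Proof.
move=> im ji Hu.
have [F1 M1] := Sfix_spec im (nonneg_co_add Hu (nonneg_a j)).
have [F2 M2] := Sfix_spec im (nonneg_co_add Hu nonneg_a0).
move: F1 M1; set T := Sfix i (co (u + a j)) => F1 M1.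
move: F2 M2; set T' := Sfix i (co (u + a0)) => F2 M2.
have H1 : (T <= T'.+1)%N.
  apply: M1; rewrite Fs_addA // -Fs_addA0 F2; lia.
rewrite Fs_addA // in F1.
have := @Fs_ge0 i (co u) T Hu.
clear M1; case: T F1 H1 => [|T0] F1 H1 Hge; first lia.
have H2 : (T' <= T0)%N.
  apply: M2; rewrite Fs_addA0; lia.
lia.
Qed.
Lemma mxEz (A : 'rV[R]_m) (z : int) k : (A *~ z) 0 k = A 0 k *~ z.
Proof.
case: z => t; first by rewrite mulmxnE.
by rewrite !NegzE !mulrNz mxE mulmxnE.
Qed.

Lemma co_sumz (z : 'I_m -> int) i k :
  co (\sum_(j < m | (j < i)%N) a j *~ z j) 0 k =
  if (k < i)%N then (z k)%:~R else 0.
Proof.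
rewrite co_sum summxE.
under eq_bigr => j _ do rewrite coMz mxEz co_aE.
case: ifP => ki.
  rewrite (bigD1 k) //= eqxx big1 ?addr0 //.
  by move=> j /andP [_ /negbTE ->]; rewrite mul0rz.
by apply: big1 => j ji; case: eqP => [e|_]; [move: ki; rewrite -e ji | rewrite mul0rz].
Qed.

Definition NF (i : nat) (u : E) : E :=
  u - \sum_(j < m | (j < i)%N)
        a j *~ Num.floor (co u 0 j + (Sfix i (co u))%:R * p j)
    + a0 *+ Sfix i (co u).

Lemma co_NF i u k : co (NF i u) 0 k =
  co u 0 k - (if (k < i)%N then
       (Num.floor (co u 0 k + (Sfix i (co u))%:R * p k))%:~R else 0)
  + (Sfix i (co u))%:R * p k.
Proof. by rewrite /NF coE coBE co_sumz coMn mulmxnE co_a0 mulr_natl. Qed.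

Lemma NF_normal i u : nonneg (co u) ->
  nonneg (co (NF i u)) /\ forall k : 'I_m, (k < i)%N -> co (NF i u) 0 k < 1.
Proof.
move=> Hu.
have key : forall k : 'I_m, (k < i)%N ->
    0 <= co (NF i u) 0 k /\ co (NF i u) 0 k < 1.
  move=> k ki; rewrite co_NF ki.
  set x := co u 0 k + _ * p k.
  have e : co u 0 k - (Num.floor x)%:~R + (Sfix i (co u))%:R * p k
           = x - (Num.floor x)%:~R by rewrite /x; ring.
  rewrite e; split; first by rewrite subr_ge0 floor_le.
  by move: (floorD1_gt x); rewrite intrD mulr1z => H; lra.
split; last by move=> k ki; case: (key k ki).
move=> k; case: (ltnP k i) => ki; first by case: (key k ki).
rewrite co_NF ltnNge ki /= subr0 addr_ge0 // mulr_ge0 //.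
by rewrite ltW // p_gt0.
Qed.

Lemma inMp_NF i u : inMp u -> inMp (NF i u).
Proof.
move=> Hu; split; last by case: (NF_normal i (proj2 Hu)).
case: Hu => Hs _.
have Ha : forall j, (rvR R (a j) <= Amat)%MS.
  by move=> j; rewrite -[rvR R (a j)](rowK (fun j => rvR R (a j))) row_sub.
rewrite /NF rvRD rvRB rvR_sum rvRMn !addmx_sub //.
  rewrite -scaleN1r scalemx_sub // summx_sub // => j _.
  by rewrite rvRMz -scaler_int scalemx_sub.
by rewrite -scaler_nat scalemx_sub //; case: inMp_a0.
Qed.

Lemma Sfix_small i y : (i < m)%N -> nonneg y ->
  (forall k : 'I_m, (k < i)%N -> y 0 k < 1) -> Sfix i y = 0%N.
Proof.
move=> im y0 small; have [_ M] := Sfix_spec im y0.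
apply/eqP; rewrite -leqn0; apply: M.
rewrite /Fs big1 // => k ki; rewrite mul0r addr0.
apply/eqP; rewrite eq_le floor_le0 small // floor_ge0 y0 //.
Qed.

Lemma Sfix_pos i y : (i < m)%N -> nonneg y -> (0 < Sfix i y)%N ->
  exists2 k : 'I_m, (k < i)%N & 1 <= y 0 k.
Proof.
move=> im y0 Spos.
case: (boolP [exists k : 'I_m, (k < i)%N && (1 <= y 0 k)]).
  by case/existsP => k /andP [ki Hk]; exists k.
move/existsPn => H; exfalso; move: Spos; rewrite Sfix_small //.
by move=> k ki; have := H k; rewrite ki /= -ltNge.
Qed.

Lemma NF_small i u : (i < m)%N -> nonneg (co u) -> Sfix i (co u) = 0%N ->
  NF i u = u.
Proof.
move=> im Hu S0.
have [F _] := Sfix_spec im Hu.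
rewrite S0 in F.
have : forall k : 'I_m, (k < i)%N -> Num.floor (co u 0 k + 0%:R * p k) = 0.
  apply/psumr_eq0P; last by move: F; rewrite /Fs => ->.
  by move=> k _; rewrite floor_ge0 mul0r addr0 Hu.
move=> Z; rewrite /NF S0 mulr0n addr0 big1 ?subr0 // => k ki.
by rewrite Z.
Qed.

Definition Phim (i : nat) (u : E) : laurent R n :=
  lam R ^+ Sfix i (co u) *: xmon R (NF i u).

Lemma Phim_small i u : (i < m)%N -> nonneg (co u) ->
  (forall k : 'I_m, (k < i)%N -> co u 0 k < 1) -> Phim i u = xmon R u.
Proof.
move=> im Hu small; have S0 := Sfix_small im Hu small.
by rewrite /Phim NF_small // S0 expr0 scale1r.
Qed.
Lemma NF_rel i u (j : 'I_m) : (i < m)%N -> (j < i)%N -> nonneg (co u) ->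
  NF i (u + a j) = NF i (u + a0).
Proof.
move=> im ji Hu; rewrite /NF (Sfix_rel im ji Hu).
set T := Sfix i (co (u + a0)).
set S0 := \sum_(k < m | (k < i)%N) a k *~ Num.floor (co u 0 k + (T.+1)%:R * p k).
have E1 : \sum_(k < m | (k < i)%N)
    a k *~ Num.floor (co (u + a j) 0 k + (T.+1)%:R * p k) = a j + S0.
  rewrite /S0 (bigD1 j) //= [in RHS](bigD1 j) //= addrA; congr (_ + _).
    by rewrite coE co_aE eqxx addrAC floorD1 mulrzDr mulr1z [RHS]addrC.
  apply: eq_bigr => k /andP [_ /negbTE kj]; by rewrite coE co_aE eq_sym kj addr0.
have E2 : \sum_(k < m | (k < i)%N)
    a k *~ Num.floor (co (u + a0) 0 k + T%:R * p k) = S0.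
  apply: eq_bigr => k _; congr (_ *~ Num.floor _).
  by rewrite coE co_a0 -[(T.+1)%:R]natr1; ring.
rewrite E1 E2 mulrS opprD !addrA.
rewrite [u + a j - a j]addrK.
rewrite [u + a0 - S0]addrAC; congr (_ + _); by rewrite addrAC.
Qed.

Lemma Phim_rel i u (j : 'I_m) : (i < m)%N -> (j < i)%N -> nonneg (co u) ->
  Phim i (u + a j) = lam R *: Phim i (u + a0).
Proof.
move=> im ji Hu; by rewrite /Phim (NF_rel im ji Hu) (Sfix_rel im ji Hu) exprS scalerA.
Qed.

Lemma Phim_shift i w : (i < m)%N -> nonneg (co w) -> forall N u,
  (Sfix i (co u) <= N)%N -> nonneg (co u) ->
  Phim i (u + w) = lam R ^+ Sfix i (co u) *: Phim i (NF i u + w).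
Proof.
move=> im Hw; elim=> [|N IH] u.
  rewrite leqn0 => /eqP S0 Hu; by rewrite NF_small // S0 expr0 scale1r.
move=> HN Hu; case: (posnP (Sfix i (co u))) => [S0|Spos].
  by rewrite NF_small // S0 expr0 scale1r.
have [k ki Hk] := Sfix_pos im Hu Spos.
set v := u - a k.
have Hv : nonneg (co v) by move=> t; rewrite /v coBE co_aE; case: eqP => [<-|_]; rewrite ?subr0 ?subr_ge0.
have ue : u = v + a k by rewrite /v subrK.
have SR := Sfix_rel im ki Hv; have NR := NF_rel im ki Hv.
rewrite ue SR NR.
rewrite (addrAC v) (Phim_rel im ki (nonneg_co_add Hv Hw)).
rewrite (addrAC v) [Phim i (v + a0 + w)]IH.
- by rewrite exprS scalerA.
- by move: HN; rewrite ue SR.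
- exact: nonneg_co_add Hv nonneg_a0.
Qed.
Local Notation L := (laurent R n).
Local Notation P := (@inS' R n m a).

Definition fj (j : 'I_m) : L := xmon R (a j) - lam R *: xmon R a0.
Definition fsq : seq L := [seq xmon R (a j) - lam R *: xmon R a0 | j <- enum 'I_m].

Lemma size_fsq : size fsq = m.
Proof. by rewrite size_map size_enum_ord. Qed.

Lemma fsq_nth (j : 'I_m) : fsq`_j = fj j.
Proof.
by rewrite (nth_map j) ?size_enum_ord // nth_ord_enum.
Qed.

Definition Iid (i : nat) (h : L) := exists G : 'I_m -> L,
  (forall j, P (G j)) /\ h = \sum_(j < m | (j < i)%N) lmul (G j) (fj j).

Lemma inS'_0 : P 0.
Proof. exact: (@supp_0 _ _ (inM R a)). Qed.

Lemma in_idealP i h : (i <= m)%N -> in_ideal P (take i fsq) h <-> Iid i h.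
Proof.
move=> im.
have sz : size (take i fsq) = i by rewrite size_takel // size_fsq.
have E0 : forall F : nat -> L,
    \sum_(j < size (take i fsq)) F j = \sum_(j < m | (j < i)%N) F j.
  move=> F; rewrite -(big_mkord xpredT F) sz big_mkord.
  by rewrite (big_ord_widen _ _ im).
split.
  case=> gs [szg [Pg ->]]; exists (fun j => gs`_j); split.
    move=> j; case: (ltnP j (size gs)) => jl; first by apply: Pg; rewrite mem_nth.
    by rewrite nth_default //; exact: inS'_0.
  rewrite (E0 (fun j => lmul gs`_j (take i fsq)`_j)); apply: eq_bigr => j ji.
  by rewrite nth_take // fsq_nth.
case=> G [PG ->]; exists (take i [seq G j | j <- enum 'I_m]); split.
  by rewrite size_takel ?sz // size_map size_enum_ord.
split.
  by move=> g /mem_take /mapP [j _ ->].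
rewrite (E0 (fun j => lmul (take i [seq G j | j <- enum 'I_m])`_j (take i fsq)`_j)).
apply: eq_bigr => j ji; rewrite !nth_take // fsq_nth (nth_map j) ?size_enum_ord //.
do 2 f_equal; by apply: val_inj; rewrite /= nth_enum_ord.
Qed.

Lemma Iid_add i h1 h2 : Iid i h1 -> Iid i h2 -> Iid i (h1 + h2).
Proof.
case=> G1 [P1 ->] [G2 [P2 ->]]; exists (fun j => G1 j + G2 j); split.
  by move=> j; apply: (@supp_add _ _ (inM R a)); [exact: P1 | exact: P2].
by rewrite -big_split /=; apply: eq_bigr => j _; rewrite lmulD.
Qed.

Lemma Iid_scale i c h : Iid i h -> Iid i (c *: h).
Proof.
case=> G [PG ->]; exists (fun j => c *: G j); split.
  by move=> j; apply: (@supp_scale _ _ (inM R a)); exact: PG.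
by rewrite scaler_sumr; apply: eq_bigr => j _; rewrite lmulZ.
Qed.

Lemma Iid_0 i : Iid i 0.
Proof.
exists (fun _ => 0); split; first by move=> j; exact: inS'_0.
by rewrite big1 // => j _; rewrite lmul0.
Qed.

Lemma Iid_sum i (I : eqType) (s : seq I) (F : I -> L) :
  (forall x, x \in s -> Iid i (F x)) -> Iid i (\sum_(x <- s) F x).
Proof.
elim: s => [|x s IH] H; first by rewrite big_nil; exact: Iid_0.
rewrite big_cons; apply: Iid_add; first by apply: H; rewrite inE eqxx.
by apply: IH => y ys; apply: H; rewrite inE ys orbT.
Qed.

Lemma Iid_ext i G f : (forall u, u \in dom f -> Iid i (G u)) -> Iid i (ext G f).
Proof. by move=> H; apply: Iid_sum => u /H; exact: Iid_scale. Qed.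

Lemma Iid_gen i (v : E) (j : 'I_m) : inMp v -> (j < i)%N ->
  Iid i (lmul (xmon R v) (fj j)).
Proof.
move=> Hv ji; exists (fun k => if k == j then xmon R v else 0); split.
  move=> k; case: eqP => _; last exact: inS'_0.
  by apply: (@supp_xmon _ _ (inM R a)); apply/inMP.
rewrite (bigD1 j) //= eqxx big1 ?addr0 // => k /andP [_ /negbTE ->].
exact: lmul0.
Qed.

Lemma lmul_fj (v : E) j :
  lmul (xmon R v) (fj j) = xmon R (v + a j) - lam R *: xmon R (v + a0).
Proof. by rewrite lmul_xmon /fj shift_bin. Qed.

Lemma reduction i : (i < m)%N -> forall N u, (Sfix i (co u) <= N)%N -> inMp u ->
  Iid i (xmon R u - Phim i u).
Proof.
move=> im; elim=> [|N IH] u.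
  rewrite leqn0 => /eqP S0 Hu.
  by rewrite /Phim NF_small // ?S0 ?expr0 ?scale1r ?subrr; [exact: Iid_0 | case: Hu].
move=> HN Hu; case: (posnP (Sfix i (co u))) => [S0|Spos].
  by rewrite /Phim NF_small // ?S0 ?expr0 ?scale1r ?subrr; [exact: Iid_0 | case: Hu].
have [k ki Hk] := Sfix_pos im (proj2 Hu) Spos.
have Hv := inMp_sub_a Hu Hk.
set v := u - a k in Hv.
have ue : u = v + a k by rewrite /v subrK.
have SR := Sfix_rel im ki (proj2 Hv).
rewrite ue (Phim_rel im ki (proj2 Hv)).
have -> : xmon R (v + a k) - lam R *: Phim i (v + a0) =
   lmul (xmon R v) (fj k) + lam R *: (xmon R (v + a0) - Phim i (v + a0)).
  rewrite lmul_fj scalerBr addrA; congr (_ - _); exact: (esym (subrK _ _)).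
apply: Iid_add; first exact: Iid_gen.
apply: Iid_scale; apply: IH; last exact: inMp_add Hv inMp_a0.
by move: HN; rewrite ue SR.
Qed.
Lemma ext_zero (f : L) : ext (fun _ => 0) f = 0.
Proof. by rewrite /ext big1 // => u _; rewrite scaler0. Qed.

Lemma ext_subf (F G : E -> L) (f : L) :
  ext (fun u => F u - G u) f = ext F f - ext G f.
Proof. by rewrite /ext -sumrB; apply: eq_bigr => u _; rewrite scalerBr. Qed.

Lemma Phi_lmul i (h : L) (j : 'I_m) : ext (Phim i) (lmul h (fj j)) =
  ext (fun u => Phim i (u + a j) - lam R *: Phim i (u + a0)) h.
Proof.
rewrite lmulE ext_ext; apply: ext_eq => u _.
by rewrite /fj extB extZ !ext_xmon extB extZ !ext_xmon.
Qed.

Lemma inS'_inMp (h : L) u : P h -> u \in dom h -> inMp u.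
Proof. by move=> Ph Hu; apply/inMP; exact: Ph. Qed.

Lemma Phi_ann i (h : L) (j : 'I_m) : (i < m)%N -> (j < i)%N -> P h ->
  ext (Phim i) (lmul h (fj j)) = 0.
Proof.
move=> im ji Ph; rewrite Phi_lmul -[RHS](ext_zero h); apply: ext_eq => u Hu.
by rewrite (Phim_rel im ji (proj2 (inS'_inMp Ph Hu))) subrr.
Qed.

Lemma Iid_ann i (h : L) : (i < m)%N -> Iid i h -> ext (Phim i) h = 0.
Proof.
move=> im [G [PG ->]]; rewrite ext_sum big1 // => j ji; exact: Phi_ann.
Qed.

Definition Normal (i : nat) (w : E) :=
  inMp w /\ forall k : 'I_m, (k < i)%N -> co w 0 k < 1.

Lemma Normal_NF i u : inMp u -> Normal i (NF i u).
Proof.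
move=> Hu; split; first exact: inMp_NF.
by case: (NF_normal i (proj2 Hu)).
Qed.

Lemma Phim_small_a (ii : 'I_m) w : Normal ii w -> Phim ii (w + a ii) = xmon R (w + a ii).
Proof.
case=> [[_ Hw] small]; apply: Phim_small => //.
  exact: nonneg_co_add Hw (nonneg_a ii).
move=> k ki; rewrite coE co_aE.
have -> : (ii == k) = false by apply/eqP => e; move: ki; rewrite -e ltnn.
by rewrite addr0 small.
Qed.
Local Notation tf := (@FracField.tofrac {poly R[i]}).

Lemma common_den (g : L) : exists D : {poly R[i]}, D != 0 /\
  forall w, exists q : {poly R[i]}, (tf D : Clam R) * coeff w g = tf q.
Proof.
suff [D [Dnz HD]] : exists D : {poly R[i]}, D != 0 /\
    forall w, w \in dom g -> exists q, (tf D : Clam R) * coeff w g = tf q.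
  exists D; split => // w; case: (boolP (w \in dom g)) => [/HD //|/coeff_outdom ->].
  by exists 0; rewrite mulr0 tofrac0.
elim: (dom g) => [|w s [D [Dnz HD]]].
  by exists 1; split => //; rewrite oner_eq0.
have [P0 [Q [Qnz HPQ]]] := frac_decomp (coeff w g : Clam R).
exists (D * Q); split; first by rewrite mulf_neq0.
move=> w'; rewrite inE => /orP [/eqP ->|/HD [q Hq]].
  by exists (D * P0); rewrite !tofracM -mulrA [tf Q * _]mulrC HPQ.
by exists (Q * q); rewrite !tofracM mulrAC Hq mulrC.
Qed.
Lemma key (ii : 'I_m) (g : L) : supp_in (Normal ii) g ->
  ext (fun w => xmon R (w + a ii) - lam R *: Phim ii (w + a0)) g = 0 -> g = 0.
Proof.
move=> Hs Hz; apply/eqP; apply/negPn/negP => gnz.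
have [D [Dnz HD]] := common_den g.
have HD' : forall w, exists q, (tf D : Clam R) * coeff w g == tf q.
  by move=> w; case: (HD w) => q e; exists q; apply/eqP.
pose pw w := xchoose (HD' w).
have Hpw : forall w, (tf D : Clam R) * coeff w g = tf (pw w).
  by move=> w; apply/eqP; exact: (xchooseP (HD' w)).
have pw_nz : forall w, w \in dom g -> pw w != 0.
  move=> w Hw; rewrite -tofrac_eq0 -Hpw mulf_neq0 ?tofrac_eq0 //.
  by rewrite -mem_dom.
have dnz : dom g != [::] by rewrite dom_eq0.
have exK : exists k, has (fun w => (pw w)`_k != 0) (dom g).
  case E: (dom g) dnz => [//|w0 s] _.
  exists (size (pw w0)).-1; apply/hasP; exists w0; first by rewrite inE eqxx.
  have : lead_coef (pw w0) != 0 by rewrite lead_coef_eq0 pw_nz // E inE eqxx.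
  by rewrite lead_coefE.
have [k [[ws Hws Hk] Hmin]] : exists k, (exists2 ws, ws \in dom g & (pw ws)`_k != 0)
    /\ forall w j, w \in dom g -> (j < k)%N -> (pw w)`_j = 0.
  case: (ex_minnP exK) => k0 /hasP [w Hw Hn] M; exists k0; split; first by exists w.
  move=> w' j Hw' jk; apply/eqP; apply/negPn/negP => nz.
  have : (k0 <= j)%N by apply: M; apply/hasP; exists w'.
  by rewrite leqNgt jk.
set t := ws + a ii.
pose Sw w := Sfix ii (co (w + a0)).
pose bw w := NF ii (w + a0) == t.
pose Q := \sum_(w <- dom g) (pw w *+ (w == ws) - pw w * 'X^((Sw w).+1) *+ bw w).
have HQ : tf Q = (tf D : Clam R) *
    coeff t (ext (fun w => xmon R (w + a ii) - lam R *: Phim ii (w + a0)) g).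
  rewrite coeff_ext mulr_sumr rmorph_sum; apply: eq_bigr => w _.
  rewrite coeffB coeff_xmon coeffZ /Phim coeffZ coeff_xmon.
  rewrite (inj_eq (addIr (a ii))) [RHS]mulrA Hpw -/(Sw w) -/(bw w).
  rewrite rmorphB !rmorphMn rmorphM rmorphXn mulrBr.
  congr (_ - _); first by rewrite mulr_natr.
  by rewrite mulrA mulr_natr mulrnAr exprS /lam !mulrA.
have Q0 : Q = 0 by apply/eqP; rewrite -tofrac_eq0 HQ Hz coeff0 mulr0.
have : Q`_k != 0.
  rewrite /Q coef_sum.
  have -> : \sum_(w <- dom g) (pw w *+ (w == ws) - pw w * 'X^((Sw w).+1) *+ bw w)`_k
      = \sum_(w <- dom g) (pw w)`_k *+ (w == ws).
    apply: eq_big_seq => w Hw; rewrite coefB !coefMn coefMXn.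
    case: ifP => kS; first by rewrite mul0rn subr0.
    rewrite (Hmin w (k - (Sw w).+1)%N) ?mul0rn ?subr0 //.
    move/negbT: kS; rewrite -leqNgt => kS.
    by rewrite ltn_subrL /=; exact: leq_trans (ltn0Sn _) kS.
  rewrite (bigD1_seq ws) ?uniq_dom //= [X in _ + X]big1 ?addr0; last first.
    by move=> w /negbTE ->; rewrite mulr0n.
  by rewrite [ws == ws]eqxx mulr1n.
by rewrite Q0 coef0 [0 == 0]eqxx.
Qed.
Lemma main_step (ii : 'I_m) (g : L) : P g -> Iid ii (lmul g (fj ii)) -> Iid ii g.
Proof.
move=> Pg HI.
have im : (ii < m)%N := ltn_ord ii.
have H0 := Iid_ann im HI.
set g' := ext (Phim ii) g.
have Hsupp : supp_in (Normal ii) g'.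
  apply: supp_ext => u Hu; apply: supp_scale; apply: supp_xmon.
  apply: Normal_NF; exact: inS'_inMp Pg Hu.
have Hz : ext (fun w => xmon R (w + a ii) - lam R *: Phim ii (w + a0)) g' = 0.
  rewrite -H0 /g' ext_ext Phi_lmul; apply: ext_eq => u Hu.
  have Hu' := inS'_inMp Pg Hu.
  rewrite [Phim ii u]/Phim extZ ext_xmon.
  rewrite (@Phim_shift ii (a ii) im (nonneg_a ii) _ u (leqnn _) (proj2 Hu')).
  rewrite (@Phim_shift ii a0 im nonneg_a0 _ u (leqnn _) (proj2 Hu')).
  rewrite Phim_small_a; last exact: Normal_NF.
  rewrite scalerBr !scalerA [lam R * _]mulrC; reflexivity.
have g'0 := key Hsupp Hz.
have -> : g = ext (fun u => xmon R u - Phim ii u) g.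
  by rewrite ext_subf ext_id -/g' g'0 subr0.
apply: Iid_ext => u Hu; apply: (reduction im (leqnn _)); exact: inS'_inMp Pg Hu.
Qed.

Lemma mx0E (k : 'I_m) : (0 : 'rV[R]_m) 0 k = 0.
Proof. by rewrite mxE. Qed.

Lemma coeff0_lmul_fj (h : L) (j : 'I_m) : P h -> coeff 0 (lmul h (fj j)) = 0.
Proof.
move=> Ph; rewrite lmulE coeff_ext big1_seq // => u /andP [_ Hu].
have [_ Hn] := inS'_inMp Ph Hu.
rewrite -/(shift u (fj j)) /fj shift_bin coeffB coeffZ !coeff_xmon.
have n1 : (u + a j == 0) = false.
  apply/eqP => e; have := congr1 (fun v => co v 0 j) e.
  rewrite coE co_aE eqxx co0 mx0E /= => e'; have := Hn j; lra.
have n2 : (u + a0 == 0) = false.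
  apply/eqP => e; have := congr1 (fun v => co v 0 j) e.
  rewrite coE co_a0 co0 mx0E => e'; have := Hn j; have := p_gt0 j; lra.
by rewrite n1 n2 mulr0 subr0 mulr0.
Qed.

Lemma regular_main : regular_seq P fsq.
Proof.
split.
- move=> f /mapP [j _ ->].
  apply: (@supp_add _ _ (inM R a)).
    by apply: supp_xmon; apply/inMP; exact: inMp_a.
  by apply: supp_opp; apply: supp_scale; apply: supp_xmon; apply/inMP; exact: inMp_a0.
- move=> i; rewrite size_fsq => im g Pg /(in_idealP _ (ltnW im)) HI.
  apply/(in_idealP _ (ltnW im)).
  have e : fsq`_i = fj (Ordinal im) := fsq_nth (Ordinal im).
  rewrite e in HI; exact: (@main_step (Ordinal im) g Pg HI).
- have e : take m fsq = fsq by rewrite take_oversize // size_fsq.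
  rewrite -e => /(in_idealP _ (leqnn m)) [G [PG E1]].
  have := congr1 (coeff 0) E1.
  rewrite /lone coeff_xmon eqxx raddf_sum big1 => [/eqP|j _].
    by rewrite oner_eq0.
  exact: coeff0_lmul_fj.
Qed.

End Coord.

Unset Implicit Arguments.

Theorem proposition5p19 (R : realType) (n m : nat)
  (a : 'I_m -> 'rV[int]_n) (a0 : 'rV[int]_n) (l : 'I_m -> nat) (l0 : nat) :
  row_free (\matrix_(j < m) rvR R (a j)) ->
  (0 < l0)%N -> (forall j, 0 < l j)%N ->
  gcdn l0 (\big[gcdn/0%N]_(j < m) l j) = 1%N ->
  a0 *+ l0 = \sum_(j < m) a j *+ l j ->
  l0 = (\sum_(j < m) l j)%N ->
  regular_seq (@inS' R n m a)
    [seq xmon R (a j) - lam R *: xmon R a0 | j <- enum 'I_m].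
Proof.
move=> hfree hl0 hl _ ha0 hsum.
exact: (@regular_main R n m a a0 l l0 hfree hl0 hl ha0 hsum).
Qed.
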